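(* Let $A$ be a real random variable with $\mathbb{E}[A]=0$ and $\mathbb{E}[A^2]=1$, and let $B$ be a real random variable independent of $A$ with continuously differentiable probability density function $f_B$. Let $\delta>0$ be such that $c=\sup_{s\in(-\delta,\delta)}\max\{|f_B(s)|,|f_B'(s)|\}$ is finite. Then for every $n\ge1$, $$\Big|\Pr\big[B\ge A/\sqrt n\big]-\Pr[B\ge0]\Big|\le\frac1n\Big(\frac{2}{\delta^2}+\frac{c}{\delta}+\frac c2\Big).$$ *)

(* Defs.v *)
From HB Require Import structures.
From mathcomp Require Import all_boot all_order all_algebra.
From mathcomp Require Import all_classical all_reals all_analysis.
Set Implicit Arguments. Unset Strict Implicit. Unset Printing Implicit Defensive.
Import Order.TTheory GRing.Theory Num.Theory.
Import numFieldNormedType.Exports.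
Local Open Scope classical_set_scope.
Local Open Scope ring_scope.

Definition indep_RV d (T : measurableType d) (R : realType) (P : probability T R)
  (X Y : T -> R) : Prop :=
  forall S U : set R, measurable S -> measurable U ->
    P (X @^-1` S `&` Y @^-1` U) = (P (X @^-1` S) * P (Y @^-1` U))%E.

Definition is_pdf d (T : measurableType d) (R : realType) (P : probability T R)
  (X : T -> R) (f : R -> R) : Prop :=
  (forall x, 0 <= f x) /\
  forall S : set R, measurable S ->
    P (X @^-1` S) = (\int[lebesgue_measure]_(x in S) (f x)%:E)%E.

Definition C1 (R : realType) (f : R -> R) : Prop :=
  (forall x : R, derivable f x 1) /\ continuous (derive1 f).

Definition local_C1_vals (R : realType) (f : R -> R) (delta : R) : set R :=
  [set r | exists s : R, - delta < s < delta /\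
      r = Num.max `|f s| `|derive1 f s| ].

(* Main.v *)
Require Import Defs.
From HB Require Import structures.
From mathcomp Require Import all_boot all_order all_algebra.
From mathcomp Require Import all_classical all_reals all_analysis.
From mathcomp Require Import ring lra measurable_realfun ftc.
Set Implicit Arguments. Unset Strict Implicit. Unset Printing Implicit Defensive.
Import Order.TTheory GRing.Theory Num.Theory.
Import numFieldNormedType.Exports.
Local Open Scope classical_set_scope.
Local Open Scope ring_scope.
Lemma isd_cont (R : realType) (g dg : R -> R) : (forall x : R, is_derive x (1:R) g (dg x)) -> continuous g.
Proof. move=> h x; have hx := h x; apply: differentiable_continuous; apply/derivable1_diffP; exact: ex_derive. Qed.

Section S.
Context (R : realType) (F f : R -> R) (c d : R).
Hypothesis dF : forall x : R, is_derive x (1:R) F (f x).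
Hypothesis df : forall x : R, derivable f x 1.
Hypothesis bf' : forall s, - d < s < d -> `|derive1 f s| <= c.
Hypothesis d0 : 0 < d.
Hypothesis bf : forall s, - d < s < d -> `|f s| <= c.

Lemma contF : continuous F.
Proof. move=> x; apply: differentiable_continuous. apply/derivable1_diffP. exact: ex_derive. Qed.

Lemma contf : continuous f.
Proof. move=> x; apply: differentiable_continuous. apply/derivable1_diffP. exact: df. Qed.

Lemma flip1 s : `|s| < d -> `|f s - f 0| <= c * `|s|.
Proof.
move=> sd.
have hd : forall a b x : R, x \in `]a, b[ -> is_derive x (1:R) f (derive1 f x).
  by move=> a b x _; rewrite derive1E; exact/derivableP/df.
have [s0|s0] := leP 0 s.
  have [x xin ->] := MVT_segment s0 (hd _ _) (continuous_subspaceT contf).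
  rewrite subr0 normrM (ger0_norm s0) ler_wpM2r // bf' //.
  move: xin sd; rewrite in_itv /= (ger0_norm s0) => /andP[h1 h2] sd; apply/andP; split; lra.
have s0' := ltW s0.
have [x xin E] := MVT_segment s0' (hd _ _) (continuous_subspaceT contf).
rewrite distrC E sub0r normrM normrN ler_wpM2r // ?normr_ge0 // bf' //.
move: xin sd; rewrite in_itv /= (ltr0_norm s0) => /andP[h1 h2] sd; apply/andP; split; lra.
Qed.

Lemma c0 : 0 <= c.
Proof. apply: le_trans (bf' (s:=0) _); first exact: normr_ge0. by rewrite oppr_lt0 d0. Qed.

Let dk1 (f0 : R) x : is_derive x (1:R) (fun s => F s - f0 * s - c / 2 * s ^+ 2) (f x - f0 - c * x).
Proof.
by apply: is_derive_eq; rewrite /GRing.scale /= !mulr1 mulrDr -mulrDl -splitr.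
Qed.

Let dk2 (f0 : R) x : is_derive x (1:R) (fun s => F s - f0 * s + c / 2 * s ^+ 2) (f x - f0 + c * x).
Proof.
by apply: is_derive_eq; rewrite /GRing.scale /= !mulr1 mulrDr -mulrDl -splitr.
Qed.

Lemma taylor_small t : `|t| < d -> `|F t - F 0 - f 0 * t| <= c / 2 * t ^+ 2.
Proof.
move=> td.
have contk1 : continuous (fun s => F s - f 0 * s - c / 2 * s ^+ 2).
  exact: isd_cont (dk1 (f 0)).
have contk2 : continuous (fun s => F s - f 0 * s + c / 2 * s ^+ 2).
  exact: isd_cont (dk2 (f 0)).
have [t0|t0] := leP 0 t.
  have [x1 x1in E1] := MVT_segment t0 (fun x _ => dk1 (f 0) x) (continuous_subspaceT contk1).
  have [x2 x2in E2] := MVT_segment t0 (fun x _ => dk2 (f 0) x) (continuous_subspaceT contk2).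
  have H1 : F t - F 0 - f 0 * t - c / 2 * t ^+ 2 = (f x1 - f 0 - c * x1) * t.
    by rewrite -[t in RHS]subr0 -E1 /=; ring.
  have H2 : F t - F 0 - f 0 * t + c / 2 * t ^+ 2 = (f x2 - f 0 + c * x2) * t.
    by rewrite -[t in RHS]subr0 -E2 /=; ring.
  move: x1in x2in; rewrite !in_itv /= => /andP[a1 b1] /andP[a2 b2].
  have := @flip1 x1 ltac:(rewrite ger0_norm //; move: td; rewrite ger0_norm //; lra).
  have := @flip1 x2 ltac:(rewrite ger0_norm //; move: td; rewrite ger0_norm //; lra).
  rewrite (ger0_norm a1) (ger0_norm a2) => /ler_normlP[h2 h2'] /ler_normlP[h1 h1'].
  have P1 : (f x1 - f 0 - c * x1) * t <= 0 by apply: mulr_le0_ge0 => //; lra.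
  have P2 : 0 <= (f x2 - f 0 + c * x2) * t by apply: mulr_ge0 => //; lra.
  apply/ler_normlP; split; lra.
have t0' := ltW t0.
have [x1 x1in E1] := MVT_segment t0' (fun x _ => dk1 (f 0) x) (continuous_subspaceT contk1).
have [x2 x2in E2] := MVT_segment t0' (fun x _ => dk2 (f 0) x) (continuous_subspaceT contk2).
have H1 : F t - F 0 - f 0 * t - c / 2 * t ^+ 2 = (f x1 - f 0 - c * x1) * t.
  move: E1 => /= E1.
  rewrite (_ : F t - F 0 - f 0 * t - c / 2 * t ^+ 2 = - ((F 0 - f 0 * 0 - c / 2 * 0 ^+ 2) - (F t - f 0 * t - c / 2 * t ^+ 2))); last by ring.
  rewrite E1; ring.
have H2 : F t - F 0 - f 0 * t + c / 2 * t ^+ 2 = (f x2 - f 0 + c * x2) * t.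
  move: E2 => /= E2.
  rewrite (_ : F t - F 0 - f 0 * t + c / 2 * t ^+ 2 = - ((F 0 - f 0 * 0 + c / 2 * 0 ^+ 2) - (F t - f 0 * t + c / 2 * t ^+ 2))); last by ring.
  rewrite E2; ring.
move: x1in x2in; rewrite !in_itv /= => /andP[a1 b1] /andP[a2 b2].
have := @flip1 x1 ltac:(rewrite ler0_norm //; move: td; rewrite ltr0_norm //; lra).
have := @flip1 x2 ltac:(rewrite ler0_norm //; move: td; rewrite ltr0_norm //; lra).
rewrite (ler0_norm b1) (ler0_norm b2) => /ler_normlP[h2 h2'] /ler_normlP[h1 h1'].
have P1 : (f x1 - f 0 - c * x1) * t <= 0 by apply: mulr_ge0_le0 => //; lra.
have P2 : 0 <= (f x2 - f 0 + c * x2) * t by apply: mulr_le0 => //; lra.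
apply/ler_normlP; split; lra.
Qed.

Lemma taylor_all t : (forall x, 0 <= F x <= 1) ->
  `|F t - F 0 - f 0 * t| <= (2 / d ^+ 2 + c / d + c / 2) * t ^+ 2.
Proof.
move=> F01.
have cc := c0.
have t2 : 0 <= t ^+ 2 by exact: sqr_ge0.
have dd : 0 < d ^+ 2 by exact: exprn_gt0.
have K1 : 0 <= 2 / d ^+ 2 by apply: divr_ge0 => //; exact: ltW.
have K2 : 0 <= c / d by apply: divr_ge0 => //; exact: ltW.
have [td|td] := ltP `|t| d.
  apply: le_trans (taylor_small td) _; rewrite ler_wpM2r //; lra.
have f0c : `|f 0| <= c by apply: bf; rewrite oppr_lt0 d0.
have dt : d ^+ 2 <= t ^+ 2.
  by rewrite -(real_normK (num_real t)) !expr2; apply: ler_pM => //; exact: ltW.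
have u1 : 1 <= t ^+ 2 / d ^+ 2 by rewrite ler_pdivlMr // mul1r.
have v1 : `|t| <= t ^+ 2 / d.
  rewrite ler_pdivlMr // -(real_normK (num_real t)) expr2.
  by apply: ler_wpM2l => //; exact: normr_ge0.
have cv : c * `|t| <= c * (t ^+ 2 / d) by exact: ler_wpM2l.
have -> : (2 / d ^+ 2 + c / d + c / 2) * t ^+ 2 = 2 * (t ^+ 2 / d ^+ 2) + c * (t ^+ 2 / d) + c / 2 * t ^+ 2.
  by rewrite !mulrDl; congr (_ + _ + _); rewrite mulrAC mulrA // mulrAC.
have ct : 0 <= c / 2 * t ^+ 2 by apply: mulr_ge0 => //; apply: divr_ge0.
have h1 : `|F t - F 0| <= 1.
  have := F01 t; have := F01 0; move=> /andP[a b] /andP[a' b']; apply/ler_normlP; split; lra.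
have h2 : `|f 0 * t| <= c * `|t| by rewrite normrM ler_wpM2r // normr_ge0.
have := ler_normB (F t - F 0) (f 0 * t).
lra.
Qed.

End S.
Section M.
Context d (T : measurableType d) (R : realType) (P : probability T R) (A B : {RV P >-> R}).
Hypothesis hind : forall S U : set R, measurable S -> measurable U ->
    P (A @^-1` S `&` B @^-1` U) = (P (A @^-1` S) * P (B @^-1` U))%E.

Definition AB := fun w => (A w, B w).
Lemma mAB : measurable_fun setT AB.
Proof. by apply: measurable_fun_pair. Qed.

HB.instance Definition _ := isMeasurableFun.Build _ _ _ _ AB mAB.

Lemma joint X : measurable X ->
  P (AB @^-1` X) = (distribution P A \x distribution P B)%E X.
Proof.
move=> mX.
have := product_measure_unique (m1 := distribution P A) (m2 := distribution P B) (m' := distribution P (AB : {mfun T >-> (R * R)%type})).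
rewrite -[LHS]/(distribution P (AB : {mfun T >-> (R * R)%type}) X).
move=> h; rewrite h //.
Qed.
End M.
Section CDF.
Context d (T : measurableType d) (R : realType) (P : probability T R) (B : {RV P >-> R}) (fB : R -> R).
Hypothesis fB0 : forall x, 0 <= fB x.
Hypothesis hpdf : forall S : set R, measurable S ->
    P (B @^-1` S) = (\int[lebesgue_measure]_(x in S) (fB x)%:E)%E.
Hypothesis cfB : continuous fB.

Definition Phi x := \int[lebesgue_measure]_(t in `]-oo, x]) fB t.

Let mfB : measurable_fun setT fB.
Proof. exact: continuous_measurable_fun. Qed.

Lemma PBle x : P [set w | B w <= x] = (Phi x)%:E.
Proof.
have -> : [set w | B w <= x] = B @^-1` `]-oo, x].
  by apply/seteqP; split => w /=; rewrite in_itv /=.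
rewrite /Phi /Rintegral fineK // -hpdf //.
by rewrite fin_num_measure //; exact: measurable_funPTI.
Qed.

Lemma PBge x : P [set w | x <= B w] = (1 - Phi x)%:E.
Proof.
have -> : [set w | x <= B w] = ~` (B @^-1` `]-oo, x[).
  apply/seteqP; split => w /=; rewrite in_itv /= => h.
    by rewrite ltNge h.
  by move: h; rewrite ltNge => /negP; rewrite negbK.
rewrite (@probability_setC _ _ _ P); last exact: measurable_funPTI.
rewrite hpdf // integral_itv_bndo_bndc; last first.
  apply/measurable_EFinP; exact: measurable_funTS.
rewrite -hpdf // (_ : B @^-1` _ = [set w | B w <= x]); last first.
  by apply/seteqP; split=> w /=; rewrite in_itv.
by rewrite PBle EFinB.
Qed.
Lemma Phi01 x : 0 <= Phi x <= 1.
Proof.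
have h := PBle x.
have m : measurable [set w | B w <= x].
  rewrite (_ : [set w | B w <= x] = B @^-1` `]-oo, x]); first exact: measurable_funPTI.
  by apply/seteqP; split => w /=; rewrite in_itv.
apply/andP; split; rewrite -lee_fin -h; [exact: measure_ge0 | exact: probability_le1].
Qed.

Lemma intfB u : lebesgue_measure.-integrable `]-oo, u] (EFin \o fB).
Proof.
apply/integrableP; split.
  by apply/measurable_EFinP; exact: measurable_funTS.
under eq_integral do rewrite /= ger0_norm //.
rewrite -hpdf //; apply: (le_lt_trans (probability_le1 P _)) => //.
  exact: measurable_funPTI.
by rewrite ltry.
Qed.

Lemma dPhi x : is_derive x (1:R) Phi (fB x).
Proof.
have [h1 h2] := @continuous_FTC1 R fB -oo%O x (x + 1) ltac:(by rewrite ltrDl) (intfB _) ltac:(by rewrite ltNyr) ltac:(exact: cfB).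
rewrite -h2 derive1E; exact: derivableP.
Qed.
End CDF.

Lemma deriv_cont (R : realType) (f : R -> R) : (forall x : R, derivable f x 1) -> continuous f.
Proof. move=> df x; apply: differentiable_continuous. apply/derivable1_diffP. exact: df. Qed.

Lemma abs_le_sq (R : realType) (a : R) : `|a| <= 1 + a ^+ 2.
Proof.
rewrite -[a ^+ 2]real_normK ?num_real //.
have := normr_ge0 a; set b := `|a|; move=> b0.
have [b1|b1] := leP b 1.
  have := sqr_ge0 b; lra.
have : b * 1 <= b * b by rewrite ler_wpM2l // ltW.
rewrite mulr1 expr2; lra.
Qed.

Unset Implicit Arguments.

Theorem lemma5 (d : measure_display) (T : measurableType d) (R : realType)
  (P : probability T R) (A B : {RV P >-> R}) (fB : R -> R) (delta : R)
  (hEA : ('E_P[A] = 0)%E)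
  (hEA2 : ('E_P[(fun w => (A w ^+ 2)%R)] = 1)%E)
  (hind : indep_RV P A B)
  (hpdf : is_pdf P B fB)
  (hC1 : C1 fB)
  (hdelta : 0 < delta)
  (hfin : has_ubound (local_C1_vals fB delta)) :
  let c := sup (local_C1_vals fB delta) in
  forall n : nat, (0 < n)%N ->
    (`| P [set w | (A w / Num.sqrt (n%:R) <= B w)%R] - P [set w | (0 <= B w)%R] |
      <= ((n%:R)^-1 * (2 / delta ^+ 2 + c / delta + c / 2))%:E)%E.
Proof.
move=> c n n0.
case: hpdf => fB0 hpdf'.
case: hC1 => dfB cd.
have cfB := deriv_cont dfB.
have hs : has_sup (local_C1_vals fB delta).
  split => //; exists (Num.max `|fB 0| `|derive1 fB 0|); exists 0; split => //.
  by rewrite oppr_lt0 hdelta.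
have cub s : - delta < s < delta -> Num.max `|fB s| `|derive1 fB s| <= c.
  by move=> hs'; apply: sup_upper_bound => //; exists s.
have bf s : - delta < s < delta -> `|fB s| <= c.
  by move=> /cub; apply: le_trans; rewrite le_max lexx.
have bf' s : - delta < s < delta -> `|derive1 fB s| <= c.
  by move=> /cub; apply: le_trans; rewrite le_max lexx orbT.
have tay t := taylor_all (dPhi fB0 hpdf' cfB) dfB bf' hdelta bf t (Phi01 hpdf').
set K := 2 / delta ^+ 2 + c / delta + c / 2.
set sn := Num.sqrt n%:R.
have sn0 : 0 < sn by rewrite sqrtr_gt0 ltr0n.
set E := [set p : (R * R)%type | p.1 / sn <= p.2].
have mE : measurable E.
  have mg : measurable_fun setT (fun p : (R * R)%type => p.2 - p.1 * sn^-1).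
    apply: measurable_funB; first exact: measurable_snd.
    by apply: measurable_funM; [exact: measurable_fst | exact: measurable_cst].
  have -> : E = (fun p : (R * R)%type => p.2 - p.1 * sn^-1) @^-1` `[0, +oo[.
    by apply/seteqP; split => p /=; rewrite in_itv /= andbT subr_ge0.
  by rewrite -[X in measurable X]setTI; exact: mg.
have E1 : P [set w | A w / sn <= B w] = (\int[distribution P A]_a (1 - Phi fB (a / sn))%:E)%E.
  rewrite (_ : [set w | _] = AB A B @^-1` E) //.
  rewrite (joint hind mE) /product_measure1; apply: eq_integral => a _ /=.
  rewrite /distribution /pushforward.
  rewrite (_ : B @^-1` xsection E a = [set w | a / sn <= B w]); last first.
    by apply/seteqP; split => w; rewrite /xsection /preimage /= in_setE.
  exact: (PBge hpdf' cfB).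
rewrite E1 (PBge hpdf' cfB 0).
have e2 : (\int[P]_w (A w ^+ 2)%:E = 1)%E by move: hEA2; rewrite unlock.
have e1 : (\int[P]_w (A w)%:E = 0)%E by move: hEA; rewrite unlock.
have mA : measurable_fun setT A by exact: measurable_funP.
have iA2 : P.-integrable setT (fun w => (A w ^+ 2)%:E).
  apply/integrableP; split.
    by apply/measurable_EFinP; exact: measurable_funX.
  under eq_integral do rewrite abse_EFin ger0_norm ?sqr_ge0 //.
  by rewrite e2 ltry.
have iA : P.-integrable setT (EFin \o A).
  have HH := integrableD measurableT (@finite_measure_integrable_cst _ _ _ P setT 1 measurableT) iA2.
  apply: (le_integrable measurableT _ _ HH) => //.
    exact/measurable_EFinP.
  move=> x _ /=; rewrite lee_fin.
  rewrite (ger0_norm (_ : 0 <= 1 + A x ^+ 2)); first exact: abs_le_sq.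
  by rewrite addr_ge0 // sqr_ge0.
set mu := distribution P A.
have imu : mu.-integrable setT EFin.
  by apply: (@integrable_pushforward _ _ _ _ _ A mA P setT EFin) => //.
have emu : (\int[mu]_a a%:E = 0)%E.
  by rewrite /mu integral_distribution //.
have emu2 : (\int[mu]_a (a ^+ 2)%:E = 1)%E.
  rewrite /mu ge0_integral_distribution //.
    by apply/measurable_EFinP; exact: measurable_funX.
  by move=> y; rewrite lee_fin sqr_ge0.
have cPhi : continuous (Phi fB) := isd_cont (dPhi fB0 hpdf' cfB).
have mPhi : measurable_fun setT (Phi fB) := continuous_measurable_fun cPhi.
set v := 1 - Phi fB 0.
set k := fB 0 / sn.
set u := fun a => 1 - Phi fB (a / sn).
have mdiv : measurable_fun setT (fun a : R => a / sn).
  by apply: measurable_funM; [exact: measurable_id | exact: measurable_cst].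
have mu_ : measurable_fun setT u.
  apply: measurable_funB; first exact: measurable_cst.
  exact: measurableT_comp.
have iu : mu.-integrable setT (EFin \o u).
  apply: (le_integrable measurableT _ _ (@finite_measure_integrable_cst _ _ _ mu setT 1 measurableT)).
    exact/measurable_EFinP.
  move=> x _ /=; rewrite lee_fin normr1 ler_norml.
  have := Phi01 hpdf' (x / sn); rewrite /u => /andP[a b]; apply/andP; split; lra.
have ic : mu.-integrable setT (EFin \o cst v) := @finite_measure_integrable_cst _ _ _ mu setT v measurableT.
have ik : mu.-integrable setT (fun a => (k%:E * a%:E)%E) := integrableZl measurableT k imu.
have i1 : mu.-integrable setT (EFin \o (fun a => u a - v)).
  apply: (eq_integrable measurableT _ _ _ (integrableB measurableT iu ic)).
  by move=> a _ /=; rewrite EFinB.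
have i2 : mu.-integrable setT (EFin \o (fun a => k * a)).
  apply: (eq_integrable measurableT _ _ _ ik).
  by move=> a _ /=; rewrite EFinM.
set h := fun a => u a - v + k * a.
have eq : (\int[mu]_a (u a)%:E - v%:E = \int[mu]_a (h a)%:E)%E.
  rewrite [in RHS](eq_integral (fun a => ((EFin \o (fun a => (u a - v)%R)) \+ (EFin \o (fun a => (k * a)%R)))%E a)); last first.
    by move=> a _; rewrite /h /= EFinD.
  rewrite [in RHS]integralD_EFin //.
  rewrite [X in _ = X + _](eq_integral (fun a => ((u a)%:E - (v)%:E)%E)); last by move=> a _; rewrite /= EFinB.
  rewrite [in RHS]integralB_EFin //.
  rewrite [X in _ = _ + X](eq_integral (fun a => (k%:E * a%:E)%E)); last by move=> a _; rewrite /= EFinM.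
  rewrite [in RHS]integralZl // emu mule0 adde0.
  rewrite integral_cst //.
  by rewrite -[X in (_ * X)%E]/(distribution P A setT) /distribution /pushforward preimage_setT probability_setT mule1.
rewrite eq.
have mh : measurable_fun setT h.
  apply: measurable_funD; first exact: measurable_funB.
  by apply: measurable_funM; [exact: measurable_cst | exact: measurable_id].
have mhE : measurable_fun setT (fun a => (h a)%:E) by exact/measurable_EFinP.
apply: (le_trans (le_abse_integral mu measurableT mhE)).
have m2 : measurable_fun setT (fun a : R => (a ^+ 2)%:E).
  by apply/measurable_EFinP; apply: measurable_funX; exact: measurable_id.
have nK : 0 <= n%:R^-1 * K.
  rewrite mulr_ge0 // ?invr_ge0 ?ler0n //.
  have cc : 0 <= c by apply: le_trans (bf 0 _); [exact: normr_ge0 | rewrite oppr_lt0 hdelta].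
  by rewrite /K !addr_ge0 // divr_ge0 // ?exprn_ge0 // ltW.
rewrite (_ : ((n%:R^-1 * K)%:E = \int[mu]_a ((n%:R^-1 * K)%:E * (a ^+ 2)%:E))%E); last first.
  rewrite ge0_integralZl_EFin //; first by rewrite emu2 mule1.
  by move=> a _; rewrite lee_fin sqr_ge0.
apply: ge0_le_integral => //.
- by apply: measurableT_comp => //.
- by apply: measurable_funeM.
move=> a _; rewrite abse_EFin -EFinM lee_fin.
have tay' := tay (a / sn); rewrite -/K in tay'.
have -> : `|h a| = `|Phi fB (a / sn) - Phi fB 0 - fB 0 * (a / sn)|.
  by rewrite -normrN /h /u /v /k; congr `|_|; ring.
apply: (le_trans tay').
have sn2 : sn ^+ 2 = n%:R by rewrite sqr_sqrtr // ler0n.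
rewrite expr_div_n sn2.
by rewrite le_eqVlt; apply/orP; left; apply/eqP; ring.
Qed.
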